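(* Let $n+1>k>1$. Index matrices $A\in\mathrm{Mat}_{n+1,k}(\mathbb C)$ as $A=(a_{i,j})_{0\le i\le n,\,1\le j\le k}$. Let $\mathbf E\subset\mathrm{Mat}_{n+1,k}(\mathbb C)\times\mathbb C^{n+1}$ be the linear subspace of pairs $(A,x)$ with $a_{n,2}=\dots=a_{n,k}=0$. Then $\mathbf W_{k,n}\cap\mathbf E=\mathbf X_{k,n}\cup\mathbf Y_{k,n}$, and the intersection multiplicity of $\mathbf W_{k,n}$ and $\mathbf E$ along each of the components $\mathbf X_{k,n}$ and $\mathbf Y_{k,n}$ is $1$.
   Context: $\mathbf W_{k,n}=\{(A,x)\in\mathrm{Mat}_{n+1,k}(\mathbb C)\times\mathbb C^{n+1}:\operatorname{rk}A<k,\ x^TA=0\}$. $X_{k,n}=\{A\in\mathrm{Mat}_{n+1,k}(\mathbb C):\operatorname{rk}A<k\text{ and the last row of }A\text{ is zero}\}$, and for $k>1$, $Y_{k,n}$ is the set of $A\in\mathrm{Mat}_{n+1,k}(\mathbb C)$ whose last $k-1$ columns form a matrix in $X_{k-1,n}$ (i.e. an $(n+1)\times(k-1)$ matrix of rank $<k-1$ with zero last row). $\mathbf X_{k,n}=\{(A,x)\in\mathbf W_{k,n}:A\in X_{k,n}\}$ and $\mathbf Y_{k,n}=\{(A,x)\in\mathbf W_{k,n}:A\in Y_{k,n}\}$. *)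

(* Defs.v *)
From HB Require Import structures.
From mathcomp Require Import all_boot all_order all_algebra.
From mathcomp Require Import complex.
From mathcomp Require Import Rstruct.
From mathcomp Require Import mpoly.

Set Implicit Arguments.
Unset Strict Implicit.
Unset Printing Implicit Defensive.

Import Order.TTheory GRing.Theory Num.Theory.
Local Open Scope ring_scope.

Notation C := (complex Rdefinitions.R).

Definition dimAmb (n k : nat) : nat := (n.+1 * k + n.+1)%N.

(* Decoding a point of C^{dimAmb n k} into a pair (A, x). *)
Definition Amat (n k : nat) (v : 'I_(dimAmb n k) -> C) : 'M[C]_(n.+1, k) :=
  \matrix_(i < n.+1, j < k) v (lshift n.+1 (mxvec_index i j)).
Definition xvec (n k : nat) (v : 'I_(dimAmb n k) -> C) : 'cV[C]_(n.+1) :=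
  \col_(i < n.+1) v (rshift (n.+1 * k) i).

(* Column index j+1 of a matrix with k columns, for j < k-1
   (0-based indexing: the paper's columns 2..k are our columns 1..k-1). *)
Lemma succ_ord_proof (k : nat) (j : 'I_(k - 1)) : ((nat_of_ord j).+1 < k)%N.
Proof. by have := ltn_ord j; rewrite ltn_subRL add1n. Qed.
Definition succ_ord (k : nat) (j : 'I_(k - 1)) : 'I_k := Ordinal (succ_ord_proof j).

Definition lastcols (m k : nat) (A : 'M[C]_(m, k)) : 'M[C]_(m, k - 1) :=
  \matrix_(i < m, j < k - 1) A i (succ_ord j).

Definition inW (n k : nat) (A : 'M[C]_(n.+1, k)) (x : 'cV[C]_(n.+1)) : Prop :=
  (\rank A < k)%N /\ x^T *m A = 0.

Definition inXmat (n k : nat) (A : 'M[C]_(n.+1, k)) : Prop :=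
  (\rank A < k)%N /\ row ord_max A = 0.

(* Y_{k,n}: the last k-1 columns form a matrix in X_{k-1,n}. *)
Definition inYmat (n k : nat) (A : 'M[C]_(n.+1, k)) : Prop :=
  (\rank (lastcols A) < k - 1)%N /\ row ord_max (lastcols A) = 0.

Definition inXX (n k : nat) (A : 'M[C]_(n.+1, k)) (x : 'cV[C]_(n.+1)) : Prop := @inW n k A x /\ inXmat A.
Definition inYY (n k : nat) (A : 'M[C]_(n.+1, k)) (x : 'cV[C]_(n.+1)) : Prop := @inW n k A x /\ inYmat A.

(* E: a_{n,2} = ... = a_{n,k} = 0 (paper indexing), i.e. A ord_max j = 0
   for all columns j >= 1 in 0-based indexing. *)
Definition inEE (n k : nat) (A : 'M[C]_(n.+1, k)) (x : 'cV[C]_(n.+1)) : Prop :=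
  forall j : 'I_k, (0 < j)%N -> A ord_max j = 0.

Definition ptset (n k : nat)
    (P : 'M[C]_(n.+1, k) -> 'cV[C]_(n.+1) -> Prop) : ('I_(dimAmb n k) -> C) -> Prop :=
  fun v => P (Amat v) (xvec v).

Definition vanishing (N : nat) (S : ('I_N -> C) -> Prop) (p : {mpoly C[N]}) : Prop :=
  forall v, S v -> p.@[v] = 0.

(* S is (nonempty and) irreducible: I(S) is a prime ideal. *)
Definition irreducible_set (N : nat) (S : ('I_N -> C) -> Prop) : Prop :=
  ~ vanishing S 1 /\
  forall p q : {mpoly C[N]}, vanishing S (p * q) -> vanishing S p \/ vanishing S q.

(* Intersection multiplicity one of V and W along Z:
   Z is irreducible, contained in V ∩ W, and the local ring of the
   scheme-theoretic intersection V ∩ W (ideal I(V) + I(W)) at the generic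
   point of Z has length 1, i.e. (I(V) + I(W)) P_P = P_P for P = I(Z):
   every f ∈ I(Z) satisfies s f ∈ I(V) + I(W) for some s ∉ I(Z).
   (This condition forces Z to be an irreducible component of V ∩ W.) *)
Definition intersection_multiplicity_one (N : nat)
    (V W Z : ('I_N -> C) -> Prop) : Prop :=
  irreducible_set Z /\
  (forall v, Z v -> V v /\ W v) /\
  forall f : {mpoly C[N]}, vanishing Z f ->
    exists s q r : {mpoly C[N]},
      ~ vanishing Z s /\ vanishing V q /\ vanishing W r /\ s * f = q + r.

(* Main.v *)
Require Import Defs.
From HB Require Import structures.
From mathcomp Require Import all_boot all_order all_algebra.
From mathcomp Require Import complex Rstruct mpoly.
From mathcomp Require Import fingroup perm.
From Stdlib Require Classical_Prop FunctionalExtensionality.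
Import GRing.Theory Num.Theory.
Set Implicit Arguments.
Unset Strict Implicit.
Unset Printing Implicit Defensive.
Local Open Scope ring_scope.


Section Closure.
Variables (D : Type) (Pr : (D -> C) -> Prop).
Hypotheses (Pext : forall F G, Pr F -> (forall v, F v = G v) -> Pr G)
  (Pconst : forall c, Pr (fun _ => c))
  (Padd : forall F G, Pr F -> Pr G -> Pr (fun v => F v + G v))
  (Pmul : forall F G, Pr F -> Pr G -> Pr (fun v => F v * G v)).

Lemma Pr_sum (I : Type) (r : seq I) (P : pred I) (F : I -> D -> C) :
  (forall i, P i -> Pr (F i)) -> Pr (fun v => \sum_(i <- r | P i) F i v).
Proof.
move=> H; elim: r => [|a r IH].
  apply: (@Pext (fun _ => 0)); [exact: Pconst | move=> v; by rewrite big_nil].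
case Pa: (P a).
  eapply Pext; [exact: (Padd (H a Pa) IH) | move=> v; by rewrite big_cons Pa].
eapply Pext; [exact: IH | move=> v; by rewrite big_cons Pa].
Qed.

Lemma Pr_prod (I : Type) (r : seq I) (P : pred I) (F : I -> D -> C) :
  (forall i, P i -> Pr (F i)) -> Pr (fun v => \prod_(i <- r | P i) F i v).
Proof.
move=> H; elim: r => [|a r IH].
  eapply Pext; [exact: (Pconst 1) | move=> v; by rewrite big_nil].
case Pa: (P a).
  eapply Pext; [exact: (Pmul (H a Pa) IH) | move=> v; by rewrite big_cons Pa].
eapply Pext; [exact: IH | move=> v; by rewrite big_cons Pa].
Qed.

Lemma Pr_exp F e : Pr F -> Pr (fun v => F v ^+ e).
Proof.
move=> H; elim: e => [|e IH].
  eapply Pext; [exact: (Pconst 1) | move=> v; by rewrite expr0].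
eapply Pext; [exact: (Pmul H IH) | move=> v; by rewrite exprS].
Qed.

Lemma Pr_comp K (phi : D -> 'I_K -> C) (f : {mpoly C[K]}) :
  (forall i, Pr (fun v => phi v i)) -> Pr (fun v => f.@[phi v]).
Proof.
move=> H; apply: (Pext _ (fun v => esym (mevalE (phi v) f))).
apply: Pr_sum => m _; apply: Pmul; first exact: Pconst.
by apply: Pr_prod => i _; exact: Pr_exp.
Qed.
End Closure.

Definition polyfun N (F : ('I_N -> C) -> C) :=
  exists P : {mpoly C[N]}, forall v, F v = P.@[v].
Arguments polyfun {N}.

Section PF.
Variable N : nat.
Implicit Types F G : ('I_N -> C) -> C.
Lemma pf_ext F G : polyfun F -> (forall v, F v = G v) -> polyfun G.
Proof. by case=> P HP H; exists P => v; rewrite -H. Qed.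
Lemma pf_const c : polyfun (fun _ : 'I_N -> C => c).
Proof. by exists c%:MP => v; rewrite mevalC. Qed.
Lemma pf_coord i : polyfun (fun v : 'I_N -> C => v i).
Proof. by exists 'X_i => v; rewrite mevalXU. Qed.
Lemma pf_add F G : polyfun F -> polyfun G -> polyfun (fun v => F v + G v).
Proof. by case=> P HP [Q HQ]; exists (P + Q) => v; rewrite mevalD HP HQ. Qed.
Lemma pf_mul F G : polyfun F -> polyfun G -> polyfun (fun v => F v * G v).
Proof. by case=> P HP [Q HQ]; exists (P * Q) => v; rewrite mevalM HP HQ. Qed.
Lemma pf_opp F : polyfun F -> polyfun (fun v => - F v).
Proof.
move=> H; apply: (pf_ext (pf_mul (pf_const (-1)) H)) => v; by rewrite mulN1r.
Qed.
Lemma pf_sub F G : polyfun F -> polyfun G -> polyfun (fun v => F v - G v).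
Proof. by move=> H1 H2; apply: pf_add => //; apply: pf_opp. Qed.
Lemma pf_sum (I : Type) (r : seq I) (P : pred I) (F : I -> ('I_N -> C) -> C) :
  (forall i, P i -> polyfun (F i)) -> polyfun (fun v => \sum_(i <- r | P i) F i v).
Proof. move=> H. exact: (Pr_sum (@pf_ext) (@pf_const) (@pf_add) r H). Qed.
Lemma pf_prod (I : Type) (r : seq I) (P : pred I) (F : I -> ('I_N -> C) -> C) :
  (forall i, P i -> polyfun (F i)) -> polyfun (fun v => \prod_(i <- r | P i) F i v).
Proof. move=> H. exact: (Pr_prod (@pf_ext) (@pf_const) (@pf_mul) r H). Qed.
Lemma pf_exp F e : polyfun F -> polyfun (fun v => F v ^+ e).
Proof. move=> H. exact: (Pr_exp (@pf_ext) (@pf_const) (@pf_mul) e H). Qed.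
Lemma pf_comp K (phi : ('I_N -> C) -> 'I_K -> C) (f : {mpoly C[K]}) :
  (forall i, polyfun (fun v => phi v i)) -> polyfun (fun v => f.@[phi v]).
Proof. move=> H. exact: (Pr_comp (@pf_ext) (@pf_const) (@pf_add) (@pf_mul) f H). Qed.
End PF.

Definition upoly (h : C -> C) := exists q : {poly C}, forall s, h s = q.[s].

Lemma up_ext F G : upoly F -> (forall v, F v = G v) -> upoly G.
Proof. by case=> P HP H; exists P => v; rewrite -H. Qed.
Lemma up_const c : upoly (fun _ => c).
Proof. by exists c%:P => v; rewrite hornerC. Qed.
Lemma up_add F G : upoly F -> upoly G -> upoly (fun v => F v + G v).
Proof. by case=> P HP [Q HQ]; exists (P + Q) => v; rewrite hornerD HP HQ. Qed.
Lemma up_mul F G : upoly F -> upoly G -> upoly (fun v => F v * G v).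
Proof. by case=> P HP [Q HQ]; exists (P * Q) => v; rewrite hornerM HP HQ. Qed.

Lemma poly_nonroot (q : {poly C}) : q != 0 -> exists s, q.[s] != 0.
Proof.
move=> q0; set rs := [seq (i%:R : C) | i <- iota 0 (size q)].
have urs : uniq rs.
  rewrite map_inj_uniq ?iota_uniq // => a b /eqP; rewrite eqr_nat => /eqP //.
case: (boolP (all (root q) rs)) => [Hall|/allPn [s _ Hs]].
  by have := max_poly_roots q0 Hall urs; rewrite size_map size_iota ltnn.
by exists s.
Qed.

Lemma polyfun_domain N (F G : ('I_N -> C) -> C) :
  polyfun F -> polyfun G -> (forall v, F v * G v = 0) ->
  (forall v, F v = 0) \/ (forall v, G v = 0).
Proof.
move=> [P HP] [Q HQ] H.
have line : forall (a b : 'I_N -> C) (R : {mpoly C[N]}),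
    upoly (fun s => R.@[fun i => a i + s * (b i - a i)]).
  move=> a b R; apply: (Pr_comp up_ext up_const up_add up_mul) => i.
  exists ((a i)%:P + 'X * (b i - a i)%:P) => s.
  by rewrite hornerD hornerC hornerM hornerX hornerC.
case: (Classical_Prop.classic (exists a, F a != 0)) => [[a Fa]|nF]; last first.
  left => v; case: (eqVneq (F v) 0) => // h; exfalso; apply: nF; by exists v.
case: (Classical_Prop.classic (exists b, G b != 0)) => [[b Gb]|nG]; last first.
  right => v; case: (eqVneq (G v) 0) => // h; exfalso; apply: nG; by exists v.
exfalso.
have [qF HqF] := line a b P; have [qG HqG] := line a b Q.
have eF : qF.[0] = F a.
  by rewrite -HqF HP; apply: meval_eq => i; rewrite mul0r addr0.
have eG : qG.[1] = G b.
  by rewrite -HqG HQ; apply: meval_eq => i; rewrite mul1r addrC subrK.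
have qF0 : qF != 0 by apply: contraNneq Fa => e; rewrite -eF e horner0.
have qG0 : qG != 0 by apply: contraNneq Gb => e; rewrite -eG e horner0.
have [s] := poly_nonroot (mulf_neq0 qF0 qG0).
by rewrite hornerM -HqF -HqG -HP -HQ H eqxx.
Qed.

Lemma irr_of_param N M (S : ('I_N -> C) -> Prop) (Phi : ('I_M -> C) -> 'I_N -> C) :
  (forall i, polyfun (fun t => Phi t i)) -> (forall t, S (Phi t)) ->
  (forall v, S v -> exists t, forall i, Phi t i = v i) -> irreducible_set S.
Proof.
move=> HPhi HS Hsurj; split.
  move/(_ (Phi (fun _ => 0)) (HS _)); rewrite meval1 => /eqP; by rewrite oner_eq0.
move=> p q Hpq.
have := polyfun_domain (pf_comp p HPhi) (pf_comp q HPhi).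
case=> [t|H|H]; first by rewrite -mevalM; apply: Hpq; apply: HS.
  by left => v /Hsurj [t Ht]; rewrite -(meval_eq p Ht) H.
by right => v /Hsurj [t Ht]; rewrite -(meval_eq q Ht) H.
Qed.

Definition Qd N (d : ('I_N -> C) -> C) (h : ('I_N -> C) -> C) :=
  exists e (G : ('I_N -> C) -> C), polyfun G /\ forall v, d v != 0 -> G v = d v ^+ e * h v.

Section Qd.
Variables (N : nat) (d : ('I_N -> C) -> C).
Hypothesis Pd : polyfun d.
Implicit Types F G h : ('I_N -> C) -> C.

Lemma Qd_ext F G : Qd d F -> (forall v, F v = G v) -> Qd d G.
Proof. by move=> [e [H [PH HH]]] E; exists e, H; split => // v /HH ->; rewrite E. Qed.
Lemma Qd_const c : Qd d (fun _ => c).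
Proof. by exists 0%N, (fun _ => c); split; [exact: pf_const | move=> v _; rewrite expr0 mul1r]. Qed.
Lemma Qd_pf h : polyfun h -> Qd d h.
Proof. by move=> Ph; exists 0%N, h; split => // v _; rewrite expr0 mul1r. Qed.
Lemma Qd_inv : Qd d (fun v => (d v)^-1).
Proof. by exists 1%N, (fun _ => 1); split; [exact: pf_const | move=> v dv; rewrite expr1 mulfV]. Qed.
Lemma Qd_add F G : Qd d F -> Qd d G -> Qd d (fun v => F v + G v).
Proof.
move=> [e1 [G1 [P1 H1]]] [e2 [G2 [P2 H2]]].
exists (e1 + e2)%N, (fun v => d v ^+ e2 * G1 v + d v ^+ e1 * G2 v); split.
  by apply: pf_add; apply: pf_mul => //; apply: pf_exp.
move=> v dv; rewrite H1 // H2 // exprD mulrDr !mulrA (mulrC (d v ^+ e2)) //.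
Qed.
Lemma Qd_mul F G : Qd d F -> Qd d G -> Qd d (fun v => F v * G v).
Proof.
move=> [e1 [G1 [P1 H1]]] [e2 [G2 [P2 H2]]].
exists (e1 + e2)%N, (fun v => G1 v * G2 v); split; first exact: pf_mul.
move=> v dv; rewrite H1 // H2 // exprD.
by rewrite -!mulrA; congr (_ * _); rewrite mulrCA.
Qed.
Lemma Qd_comp K (phi : ('I_N -> C) -> 'I_K -> C) (f : {mpoly C[K]}) :
  (forall i, Qd d (fun v => phi v i)) -> Qd d (fun v => f.@[phi v]).
Proof. move=> H. exact: (Pr_comp (@Qd_ext) (@Qd_const) (@Qd_add) (@Qd_mul) f H). Qed.
End Qd.

Lemma mevalXn N (v : 'I_N -> C) (p : {mpoly C[N]}) e : (p ^+ e).@[v] = p.@[v] ^+ e.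
Proof. by elim: e => [|e IH]; rewrite ?expr0 ?meval1 // !exprS mevalM IH. Qed.

Lemma mult_one_crit N (V W Z : ('I_N -> C) -> Prop) (d : ('I_N -> C) -> C)
    (phi : ('I_N -> C) -> 'I_N -> C) :
  irreducible_set Z -> (forall v, Z v -> V v /\ W v) ->
  polyfun d ->
  (forall i, Qd d (fun v => phi v i)) ->
  (forall v, W v -> d v != 0 -> forall i, phi v i = v i) ->
  (forall v, V v -> d v != 0 -> Z (phi v)) ->
  (exists v0, Z v0 /\ d v0 != 0) ->
  intersection_multiplicity_one V W Z.
Proof.
move=> Zirr ZVW [Dp HD] Hphi HW HV [v0 [Zv0 dv0]].
split => //; split => // f Zf.
have [e [G [[Gp HG] HGe]]] := Qd_comp (ex_intro _ Dp HD) f Hphi.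
exists (Dp ^+ e.+1), (Dp * Gp), (Dp ^+ e.+1 * f - Dp * Gp); split.
  move/(_ v0 Zv0)/eqP; by rewrite mevalXn -HD expf_eq0 /= (negbTE dv0).
split.
  move=> v Vv; rewrite mevalM -HD -HG; case: (eqVneq (d v) 0) => [->|dv].
    by rewrite mul0r.
  by rewrite HGe // (Zf _ (HV v Vv dv)) !mulr0.
split.
  move=> v Wv; rewrite mevalB !mevalM mevalXn -HD -HG.
  case: (eqVneq (d v) 0) => [->|dv]; first by rewrite mul0r expr0n /= mul0r subrr.
  by rewrite HGe // (meval_eq f (HW v Wv dv)) exprS mulrA subrr.
by rewrite addrC subrK.
Qed.


Lemma rank_ltP p q (A : 'M[C]_(p, q)) :
  (\rank A < q)%N <-> exists z : 'cV[C]_q, z != 0 /\ A *m z = 0.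
Proof.
split.
  move=> Hr; have : kermx A^T != 0.
    by rewrite kermx_eq0 /row_free mxrank_tr neq_ltn Hr.
  case/rowV0Pn => u /sub_kermxP Hu u0; exists u^T; split; first by rewrite trmx_eq0.
  by rewrite -[A]trmxK -trmx_mul Hu trmx0.
case=> z [z0 Az].
have Hs : (z^T <= kermx A^T)%MS by apply/sub_kermxP; rewrite -trmx_mul Az trmx0.
have := mxrankS Hs; rewrite mxrank_ker rank_rV trmx_eq0 z0 mxrank_tr.
by rewrite lt0n subn_eq0 -ltnNge.
Qed.

Lemma rank_col_le (p q r : nat) (A : 'M[C]_(p,q)) (B : 'M[C]_(r,q)) :
  (\rank (col_mx A B) <= \rank A + \rank B)%N.
Proof. rewrite -addsmxE; exact: mxrank_adds_leqif. Qed.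

Lemma lker_last n q (A : 'M[C]_(n.+1, q)) : (\rank A < n)%N ->
  exists y : 'cV[C]_(n.+1), [/\ y != 0, y^T *m A = 0 & y ord_max 0 = 0].
Proof.
move=> Hr; set Ae := row_mx A (delta_mx ord_max 0 : 'cV[C]_(n.+1)).
have : (\rank Ae^T < n.+1)%N.
  rewrite tr_row_mx; apply: leq_ltn_trans (rank_col_le _ _) _.
  by rewrite !mxrank_tr mxrank_delta addn1 ltnS.
case/rank_ltP => y [y0 Hy]; exists y; split => //.
  by move: Hy; rewrite tr_row_mx mul_col_mx => /eqP; rewrite col_mx_eq0 => /andP[/eqP H _];
    rewrite -[y^T *m A]trmxK trmx_mul trmxK H trmx0.
move: Hy; rewrite tr_row_mx mul_col_mx => /eqP; rewrite col_mx_eq0 => /andP[_ /eqP H].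
transitivity (((delta_mx ord_max 0 : 'cV[C]_(n.+1))^T *m y) 0 0); last by rewrite H mxE.
rewrite mxE (bigD1 ord_max) //= !mxE !eqxx mul1r big1 ?addr0 // => i /negbTE Hi.
by rewrite !mxE Hi mul0r.
Qed.

Section Enc.
Variables n k : nat.
Definition enc (A : 'M[C]_(n.+1,k)) (x : 'cV[C]_(n.+1)) : 'I_(dimAmb n k) -> C :=
  fun i => match split (i : 'I_(n.+1 * k + n.+1)) with
           | inl a => mxvec A 0 a | inr b => x b 0 end.

Lemma split_lshift p q (i : 'I_p) : split (lshift q i) = inl i.
Proof. exact: (unsplitK (inl i)). Qed.
Lemma split_rshift p q (i : 'I_q) : split (rshift p i) = inr i.
Proof. exact: (unsplitK (inr i)). Qed.

Lemma Amat_enc A x : Amat (enc A x) = A.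
Proof. by apply/matrixP => i j; rewrite mxE /enc split_lshift mxvecE. Qed.
Lemma xvec_enc A x : xvec (enc A x) = x.
Proof. by apply/matrixP => i j; rewrite mxE /enc split_rshift ord1. Qed.
Lemma enc_dec v i : enc (Amat v) (xvec v) i = v i.
Proof.
have -> : v i = v (unsplit (split (i : 'I_(n.+1 * k + n.+1)))) by rewrite splitK.
rewrite /enc; case: (split _) => [a|b] /=.
  by case/mxvec_indexP: a => r c; rewrite mxvecE mxE.
by rewrite mxE.
Qed.
Lemma enc_cases i : (exists r c, forall A x, enc A x i = A r c) \/
                    (exists r, forall A x, enc A x i = x r 0).
Proof.
rewrite /enc; case: (split _) => [a|b]; last by right; exists b.
by left; case/mxvec_indexP: a => r c; exists r, c => A x; rewrite mxvecE.
Qed.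
Lemma enc_Pr (D : Type) (Pr : (D -> C) -> Prop)
    (Pext : forall F G, Pr F -> (forall v, F v = G v) -> Pr G)
    (A : D -> 'M[C]_(n.+1,k)) (x : D -> 'cV[C]_(n.+1)) :
  (forall r c, Pr (fun t => A t r c)) -> (forall r, Pr (fun t => x t r 0)) ->
  forall i, Pr (fun t => enc (A t) (x t) i).
Proof.
move=> HA Hx i; case: (enc_cases i) => [[r [c H]]|[r H]].
  by apply: Pext (HA r c) _ => t; rewrite H.
by apply: Pext (Hx r) _ => t; rewrite H.
Qed.
Lemma Amat_pf r c : polyfun (fun v : 'I_(dimAmb n k) -> C => Amat v r c).
Proof. by apply: pf_ext (pf_coord _) _ => v; rewrite mxE. Qed.
Lemma xvec_pf r : polyfun (fun v : 'I_(dimAmb n k) -> C => xvec v r 0).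
Proof. by apply: pf_ext (pf_coord _) _ => v; rewrite mxE. Qed.
End Enc.


Section Main.
Variables n m : nat.
Local Notation K := m.+2.

Lemma lastcolsE (A : 'M[C]_(n.+1, K)) : lastcols A = rsubmx (A : 'M_(n.+1, 1 + m.+1)).
Proof. by apply/matrixP => i j; rewrite !mxE; congr (A i _); apply: val_inj. Qed.

Lemma mul_last_row (A : 'M[C]_(n.+1, K)) (z : 'cV[C]_K) :
  (forall j : 'I_K, (0 < j)%N -> A ord_max j = 0) ->
  (A *m z) ord_max 0 = A ord_max 0 * z 0 0.
Proof.
move=> HE; rewrite mxE (bigD1 0) //= big1 ?addr0 // => j j0.
by rewrite HE ?mul0r // lt0n; apply: contra j0 => /eqP j0; apply/eqP/val_inj.
Qed.

Lemma kernel_lastcols (A : 'M[C]_(n.+1, K)) (z : 'cV[C]_K) :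
  z != 0 -> A *m z = 0 -> z 0 0 = 0 -> (\rank (lastcols A) < m.+1)%N.
Proof.
move=> z0 Az z00; apply/rank_ltP; exists (dsubmx (z : 'cV_(1 + m.+1))); split.
  apply: contra z0 => /eqP d0; rewrite -[z](@vsubmxK _ 1 m.+1) d0.
  have -> : usubmx (z : 'cV_(1 + m.+1)) = 0 by apply/matrixP => i j; rewrite !ord1 !mxE -z00; congr (z _ _); apply: val_inj.
  by apply/eqP/matrixP => i j; rewrite !mxE; case: splitP => ? _; rewrite mxE.
rewrite lastcolsE; change (@mulmx C n.+1 (1 + m.+1) 1 A z = 0) in Az.
move: Az; rewrite -{1}[A](@hsubmxK _ _ 1 m.+1) -{1}[z](@vsubmxK _ 1 m.+1).
rewrite mul_row_col.
have -> : usubmx (z : 'cV_(1 + m.+1)) = 0 by apply/matrixP => i j; rewrite !ord1 !mxE -z00; congr (z _ _); apply: val_inj.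
by rewrite mulmx0 add0r.
Qed.

Lemma WE_XY (A : 'M[C]_(n.+1, K)) x : inW A x /\ inEE A x <-> inXX A x \/ inYY A x.
Proof.
split.
  move=> [[Hr Hx] HE]; case: (eqVneq (A ord_max 0) 0) => a0.
    left; split => //; split => //; apply/rowP => j; rewrite !mxE.
    case: (ltnP 0 j) => [/HE -> //|]; rewrite leqn0 => /eqP j0.
    by have -> : j = 0 by apply: val_inj.
  right; split => //; split.
    case/rank_ltP: Hr => z [z0 Az]; apply: (kernel_lastcols z0 Az).
    have := mul_last_row z HE; rewrite Az mxE => /esym /eqP.
    by rewrite mulf_eq0 (negbTE a0) /= => /eqP.
  by apply/rowP => j; rewrite !mxE; apply: HE.
case=> [[HW [_ HX]]|[HW [_ HY]]]; split => // j jpos.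
  by move/rowP: HX => /(_ j); rewrite !mxE.
have jm : (j.-1 < m.+1)%N by rewrite -ltnS prednK.
move/rowP: HY => /(_ (@Ordinal (K - 1) _ jm)); rewrite !mxE.
by have -> : succ_ord (@Ordinal (K - 1) _ jm) = j by apply: val_inj; rewrite /= prednK.
Qed.
End Main.


Definition Mm p (y : 'cV[C]_p) (j : 'I_p) : 'M[C]_p := y j 0 *: 1%:M - delta_mx j 0 *m y^T.

Section MmLemmas.
Variable p : nat.
Implicit Types y z : 'cV[C]_p.

Lemma Mm_left y j : y^T *m Mm y j = 0.
Proof.
rewrite mulmxBr -scalemxAr mulmx1 mulmxA -colE (mx11_scalar (col j y^T)) mul_scalar_mx.
by rewrite !mxE subrr.
Qed.

Lemma Mm_fix q y j (B : 'M[C]_(p, q)) : y^T *m B = 0 -> Mm y j *m B = y j 0 *: B.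
Proof. by move=> H; rewrite mulmxBl -scalemxAl mul1mx -mulmxA H mulmx0 subr0. Qed.

Lemma MmT_ker z l : (Mm z l)^T *m z = 0.
Proof. by apply: trmx_inj; rewrite trmx_mul trmxK Mm_left trmx0. Qed.

Lemma MmT_right q z l (B : 'M[C]_(q, p)) : B *m z = 0 -> B *m (Mm z l)^T = z l 0 *: B.
Proof.
move=> H; apply: trmx_inj; rewrite trmx_mul trmxK Mm_fix ?linearZ //.
by rewrite -trmx_mul H trmx0.
Qed.

Lemma Mm0 j : Mm (0 : 'cV[C]_p) j = 0.
Proof. by rewrite /Mm mxE scale0r trmx0 mulmx0 subr0. Qed.
End MmLemmas.

Lemma vec_nz p (v : 'cV[C]_p) : v != 0 -> exists i, v i 0 != 0.
Proof.
move=> v0; case: (boolP [exists i, v i 0 != 0]) => [/existsP//|/existsPn H].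
case/negP: v0; apply/eqP/matrixP => i j; rewrite ord1 mxE.
by move: (H i); rewrite negbK => /eqP.
Qed.

Lemma factor2 p q (w : 'cV[C]_p) (z : 'cV[C]_q) (B : 'M[C]_(p,q)) :
  w != 0 -> z != 0 -> w^T *m B = 0 -> B *m z = 0 ->
  exists U : 'I_p -> 'I_q -> 'M[C]_(p,q),
    B = \sum_j \sum_l Mm w j *m U j l *m (Mm z l)^T.
Proof.
move=> w0 z0 wB Bz; have [j0 wj0] := vec_nz w0; have [l0 zl0] := vec_nz z0.
exists (fun j l => if (j == j0) && (l == l0) then (w j0 0 * z l0 0)^-1 *: B else 0).
have E : forall j l, Mm w j *m (if (j == j0) && (l == l0) then (w j0 0 * z l0 0)^-1 *: B else 0)
   *m (Mm z l)^T = if (j == j0) && (l == l0) then B else 0.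
  move=> j l; case: ifP => [/andP[/eqP-> /eqP->]|_]; last by rewrite mulmx0 mul0mx.
  rewrite -mulmxA -scalemxAl (MmT_right l0 Bz) scalerA Mm_fix; last first.
    by rewrite -scalemxAr wB scaler0.
  by rewrite scalerA mulrCA mulVf ?mulf_neq0 // scale1r.
under eq_bigr => j _ do under eq_bigr => l _ do rewrite E.
rewrite (bigD1 j0) //= (bigD1 l0) //= !eqxx /= big1 ?addr0 => [|l /negbTE Hl]; last by rewrite Hl.
rewrite big1 ?addr0 // => j /negbTE Hj; rewrite big1 // => l _; by rewrite Hj.
Qed.

Lemma factor1 p (y : 'cV[C]_p) (g : 'cV[C]_p) : y != 0 -> y^T *m g = 0 ->
  exists u : 'I_p -> 'cV[C]_p, g = \sum_j Mm y j *m u j.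
Proof.
move=> y0 yg; have [j0 yj0] := vec_nz y0.
exists (fun j => if j == j0 then (y j0 0)^-1 *: g else 0).
rewrite (bigD1 j0) //= eqxx big1 ?addr0 => [|j /negbTE ->]; last by rewrite mulmx0.
by rewrite -scalemxAr Mm_fix // scalerA mulVf // scale1r.
Qed.

Section Dn.
Variable p : nat.
Definition Dn : 'M[C]_(p.+1) := 1%:M - delta_mx ord_max ord_max.
Definition en : 'cV[C]_(p.+1) := delta_mx ord_max 0.

Lemma Dn_tr : Dn^T = Dn.
Proof. by rewrite /Dn linearB /= trmx1 trmx_delta. Qed.
Lemma Dn_idem : Dn *m Dn = Dn.
Proof. by rewrite /Dn mulmxBl mul1mx mulmxBr mulmx1 mul_delta_mx subrr subr0. Qed.
Lemma en_Dn : en^T *m Dn = 0.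
Proof. by rewrite /Dn /en trmx_delta mulmxBr mulmx1 mul_delta_mx subrr. Qed.
Lemma Dn_en : Dn *m en = 0.
Proof. by rewrite /Dn /en mulmxBl mul1mx mul_delta_mx subrr. Qed.
Lemma row_Dn : row ord_max Dn = 0.
Proof. by rewrite rowE -trmx_delta -/en en_Dn. Qed.
Lemma row_Dn_mul q (A : 'M[C]_(p.+1, q)) : row ord_max (Dn *m A) = 0.
Proof. by rewrite row_mul row_Dn mul0mx. Qed.
Lemma Dn_rowlast q (A : 'M[C]_(p.+1, q)) : row ord_max A = 0 -> Dn *m A = A.
Proof.
move=> H; rewrite /Dn mulmxBl mul1mx -(mul_delta_mx (0 : 'I_1)) -mulmxA -rowE H.
by rewrite mulmx0 subr0.
Qed.
Lemma Dn_last (y : 'cV[C]_(p.+1)) : y ord_max 0 = 0 -> Dn *m y = y.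
Proof. by move=> H; apply: Dn_rowlast; apply/rowP => j; rewrite ord1 !mxE. Qed.
Lemma x_decomp (x : 'cV[C]_(p.+1)) : x = Dn *m x + x ord_max 0 *: en.
Proof.
rewrite /Dn mulmxBl mul1mx -(mul_delta_mx (0 : 'I_1)) -mulmxA -rowE.
rewrite (mx11_scalar (row ord_max x)) mul_mx_scalar mxE /en.
by rewrite subrK.
Qed.
Lemma Dn_last0 (y : 'cV[C]_(p.+1)) : (Dn *m y) ord_max 0 = 0.
Proof. by have := row_Dn_mul y; move/rowP => /(_ 0); rewrite !mxE. Qed.
End Dn.

Section MxClosure.
Variables (D : Type) (Pr : (D -> C) -> Prop).
Hypotheses (Pext : forall F G, Pr F -> (forall v, F v = G v) -> Pr G)
  (Pconst : forall c, Pr (fun _ => c))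
  (Padd : forall F G, Pr F -> Pr G -> Pr (fun v => F v + G v))
  (Pmul : forall F G, Pr F -> Pr G -> Pr (fun v => F v * G v)).

Definition Mpr a b (M : D -> 'M[C]_(a,b)) := forall i j, Pr (fun t => M t i j).

Lemma Pr_opp F : Pr F -> Pr (fun v => - F v).
Proof. by move=> H; apply: Pext (Pmul (Pconst (-1)) H) _ => v; rewrite mulN1r. Qed.

Lemma Mpr_const a b (M : 'M[C]_(a,b)) : Mpr (fun _ => M).
Proof. by move=> i j; apply: Pconst. Qed.
Lemma Mpr_mx a b (f : D -> 'I_a -> 'I_b -> C) :
  (forall i j, Pr (fun t => f t i j)) -> Mpr (fun t => \matrix_(i, j) f t i j).
Proof. by move=> H i j; apply: Pext (H i j) _ => t; rewrite mxE. Qed.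
Lemma Mpr_add a b (M N : D -> 'M[C]_(a,b)) : Mpr M -> Mpr N -> Mpr (fun t => M t + N t).
Proof. by move=> HM HN i j; apply: Pext (Padd (HM i j) (HN i j)) _ => t; rewrite mxE. Qed.
Lemma Mpr_opp a b (M : D -> 'M[C]_(a,b)) : Mpr M -> Mpr (fun t => - M t).
Proof. by move=> HM i j; apply: Pext (Pr_opp (HM i j)) _ => t; rewrite mxE. Qed.
Lemma Mpr_sub a b (M N : D -> 'M[C]_(a,b)) : Mpr M -> Mpr N -> Mpr (fun t => M t - N t).
Proof. by move=> HM HN; apply: Mpr_add => //; apply: Mpr_opp. Qed.
Lemma Mpr_scale a b (s : D -> C) (M : D -> 'M[C]_(a,b)) : Pr s -> Mpr M -> Mpr (fun t => s t *: M t).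
Proof. by move=> Hs HM i j; apply: Pext (Pmul Hs (HM i j)) _ => t; rewrite mxE. Qed.
Lemma Mpr_tr a b (M : D -> 'M[C]_(a,b)) : Mpr M -> Mpr (fun t => (M t)^T).
Proof. by move=> HM i j; apply: Pext (HM j i) _ => t; rewrite mxE. Qed.
Lemma Mpr_mul a b c (M : D -> 'M[C]_(a,b)) (N : D -> 'M[C]_(b,c)) :
  Mpr M -> Mpr N -> Mpr (fun t => M t *m N t).
Proof.
move=> HM HN i j; apply: Pext (Pr_sum Pext Pconst Padd _ (fun k _ => Pmul (HM i k) (HN k j))) _.
by move=> t; rewrite mxE.
Qed.
Lemma Mpr_sum a b (I : finType) (F : I -> D -> 'M[C]_(a,b)) :
  (forall i, Mpr (F i)) -> Mpr (fun t => \sum_(i : I) F i t).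
Proof.
move=> H i j; apply: Pext (Pr_sum Pext Pconst Padd (index_enum I) (fun k _ => H k i j)) _.
by move=> t; rewrite summxE.
Qed.
Lemma Pr_det a (M : D -> 'M[C]_a) : Mpr M -> Pr (fun t => \det (M t)).
Proof.
move=> HM; pose F (s : 'S_a) (t : D) := (-1) ^+ s * \prod_i M t i (s i).
have HF : forall s, xpredT s -> Pr (F s).
  move=> s _; apply: Pmul; first exact: Pconst.
  exact: (Pr_prod Pext Pconst Pmul _ (fun i _ => HM _ _)).
by apply: Pext (Pr_sum Pext Pconst Padd (index_enum _) HF) _ => t; rewrite /F.
Qed.
Lemma Mpr_adj a (M : D -> 'M[C]_a) : Mpr M -> Mpr (fun t => \adj (M t)).
Proof.
move=> HM i j.
have H : Pr (fun t => (-1) ^+ (j + i) * \det (row' j (col' i (M t)))).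
  apply: Pmul; first exact: Pconst.
  by apply: Pr_det => r c; apply: Pext (HM _ _) _ => t; rewrite !mxE.
by apply: Pext H _ => t; rewrite mxE.
Qed.
End MxClosure.


Definition BX p q (w : 'cV[C]_p) (U : 'I_p -> 'I_q -> 'M[C]_(p,q)) (z : 'cV[C]_q) : 'M[C]_(p,q) :=
  \sum_j \sum_l Mm w j *m U j l *m (Mm z l)^T.

Lemma BX_left p q w U z : w^T *m @BX p q w U z = 0.
Proof.
rewrite /BX mulmx_sumr big1 // => j _; rewrite mulmx_sumr big1 // => l _.
by rewrite !mulmxA Mm_left !mul0mx.
Qed.
Lemma BX_ker p q w U z : @BX p q w U z *m z = 0.
Proof.
rewrite /BX mulmx_suml big1 // => j _; rewrite mulmx_suml big1 // => l _.
by rewrite -mulmxA MmT_ker mulmx0.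
Qed.
Lemma BX_z0 p q w U : @BX p q w U 0 = 0.
Proof.
rewrite /BX big1 // => j _; rewrite big1 // => l _.
by rewrite Mm0 trmx0 mulmx0.
Qed.

Lemma rank_BX p q w U z : (0 < q)%N -> (\rank (Dn p *m @BX p.+1 q w U z) < q)%N.
Proof.
move=> q0; case: (eqVneq z 0) => [->|z0].
  by rewrite BX_z0 mulmx0 mxrank0.
by apply/rank_ltP; exists z; split => //; rewrite -mulmxA BX_ker mulmx0.
Qed.

Lemma DnT_Dn p (y : 'cV[C]_(p.+1)) : (Dn p *m y)^T *m Dn p = (Dn p *m y)^T.
Proof. by rewrite trmx_mul Dn_tr -mulmxA Dn_idem. Qed.

Section XY.
Variables n m : nat.
Hypothesis hkn : (m.+2 < n.+1)%N.
Local Notation K := m.+2.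

Lemma X_image (y : 'cV[C]_(n.+1)) c (U : 'I_n.+1 -> 'I_K -> 'M[C]_(n.+1,K)) (z : 'cV[C]_K) xn :
  inXX (Dn n *m BX (Dn n *m y) U z) (c *: (Dn n *m y) + xn *: en n).
Proof.
have rk := @rank_BX n K (Dn n *m y) U z isT.
split; split => //; last exact: row_Dn_mul.
rewrite linearD /= !linearZ /= mulmxDl -!scalemxAl !mulmxA DnT_Dn en_Dn mul0mx.
by rewrite BX_left !scaler0 addr0.
Qed.

Lemma X_surj A x : inXX A x -> exists y c U z xn,
  A = Dn n *m @BX n.+1 K (Dn n *m y) U z /\ x = c *: (Dn n *m y) + xn *: en n.
Proof.
move=> [[Hr Hx] [_ Hrow]].
have DA : Dn n *m A = A by apply: Dn_rowlast.
have [y [c [wy [xe wA]]]] : exists y c, [/\ Dn n *m y != 0,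
    x = c *: (Dn n *m y) + x ord_max 0 *: en n & (Dn n *m y)^T *m A = 0].
  case: (eqVneq (Dn n *m x) 0) => Dx.
    have [y [y0 yA yn]] := lker_last (leq_trans Hr (hkn : (K <= n)%N)).
    exists y, 0; rewrite Dn_last //; split => //.
    by rewrite scale0r add0r {1}(x_decomp x) Dx add0r.
  exists x, 1; split => //; first by rewrite scale1r -x_decomp.
  by rewrite trmx_mul Dn_tr -mulmxA DA Hx.
have [z [z0 Az]] := (rank_ltP A).1 Hr.
have [U HU] := factor2 wy z0 wA Az.
by exists y, c, U, z, (x ord_max 0); split => //; rewrite /BX -HU DA.
Qed.
End XY.

Lemma rank_row_lt p q (g : 'cV[C]_p) (L : 'M[C]_(p, q)) :
  (\rank L < q)%N -> (\rank (row_mx g L) < 1 + q)%N.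
Proof.
case/rank_ltP => w [w0 Lw]; apply/rank_ltP; exists (col_mx 0 w); split.
  by rewrite col_mx_eq0 negb_and w0 orbT.
by rewrite mul_row_col mulmx0 add0r Lw.
Qed.

Section Y.
Variables n m : nat.
Hypothesis hkn : (m.+2 < n.+1)%N.
Local Notation K := m.+2.

Definition yY (w : 'cV[C]_(n.+1)) (c yn : C) : 'cV[C]_(n.+1) := c *: (Dn n *m w) + yn *: en n.
Definition AY (w : 'cV[C]_(n.+1)) (c yn : C) (U : 'I_n.+1 -> 'I_m.+1 -> 'M[C]_(n.+1,m.+1))
    (z : 'cV[C]_(m.+1)) (u : 'I_n.+1 -> 'cV[C]_(n.+1)) : 'M[C]_(n.+1, K) :=
  row_mx (\sum_j Mm (yY w c yn) j *m u j) (Dn n *m BX (Dn n *m w) U z).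

Lemma Y_image w c yn U z u c2 : inYY (AY w c yn U z u) (c2 *: yY w c yn).
Proof.
have lc : lastcols (AY w c yn U z u) = Dn n *m BX (Dn n *m w) U z.
  by rewrite lastcolsE row_mxKr.
have rL := @rank_BX n m.+1 (Dn n *m w) U z isT.
split; last by split; rewrite lc //; exact: row_Dn_mul.
split; first exact: rank_row_lt.
change (@mulmx C 1 n.+1 (1 + m.+1) (c2 *: yY w c yn)^T (AY w c yn U z u) = 0).
rewrite /AY mul_mx_row; apply/eqP; rewrite row_mx_eq0; apply/andP; split; apply/eqP.
  rewrite linearZ /= -scalemxAl mulmx_sumr big1 ?scaler0 // => j _.
  by rewrite mulmxA Mm_left mul0mx.
rewrite linearZ /= -scalemxAl /yY linearD /= !linearZ /= mulmxDl -!scalemxAl !mulmxA.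
by rewrite DnT_Dn en_Dn mul0mx BX_left !scaler0 addr0 scaler0.
Qed.
Lemma en_nz : en n != 0.
Proof. by apply/eqP => /matrixP/(_ ord_max 0); rewrite !mxE !eqxx => /eqP; rewrite oner_eq0. Qed.

Lemma enT_mul (g : 'cV[C]_(n.+1)) : (en n)^T *m g = (g ord_max 0)%:M.
Proof. by rewrite /en trmx_delta -rowE (mx11_scalar (row _ _)) mxE. Qed.

Lemma Y_surj A x : inYY A x -> exists w c yn c2 U z u,
  A = AY w c yn U z u /\ x = c2 *: yY w c yn.
Proof.
move=> [[HrA Hx] [HrL HrowL]]; rewrite lastcolsE in HrL HrowL.
set g := lsubmx (A : 'M_(n.+1, 1 + m.+1)) in HrL HrowL *.
set L := rsubmx (A : 'M_(n.+1, 1 + m.+1)) in HrL HrowL *.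
have xg : x^T *m g = 0 by rewrite /g mulmx_lsub Hx; apply/matrixP => i j; rewrite !mxE.
have xL : x^T *m L = 0 by rewrite /L mulmx_rsub Hx; apply/matrixP => i j; rewrite !mxE.
have DL : Dn n *m L = L by apply: Dn_rowlast.
have hmn : (m.+1 < n)%N by rewrite -ltnS.
have [w0 [w00 w0L w0n]] := lker_last (leq_trans HrL (ltnW hmn)).
have Dw0 := Dn_last w0n.
have [w [c [yn [c2 [Dw [DwL [y0 [yg xe]]]]]]]] : exists w c yn c2,
    [/\ Dn n *m w != 0, (Dn n *m w)^T *m L = 0, yY w c yn != 0,
        (yY w c yn)^T *m g = 0 & x = c2 *: yY w c yn].
  case: (eqVneq x 0) => [x0|xn0].
    case: (eqVneq (g ord_max 0) 0) => a0.
      exists w0, 0, 1, 0; rewrite /yY !scale0r !add0r scale1r Dw0 x0.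
      split => //; first exact: en_nz.
      by rewrite enT_mul a0 raddf0.
    exists w0, (g ord_max 0), (- (w0^T *m g) 0 0), 0; rewrite /yY Dw0 x0 scale0r.
    split => //.
      apply/eqP => /(congr1 (mulmx (Dn n))); rewrite mulmxDr -!scalemxAr Dw0 Dn_en scaler0 addr0.
      by rewrite mulmx0 => /eqP; rewrite scaler_eq0 (negbTE a0) (negbTE w00).
    set s := (w0^T *m g) 0 0.
    rewrite linearD /= !linearZ /= mulmxDl -!scalemxAl enT_mul (mx11_scalar (w0^T *m g)) -/s.
    by rewrite !scale_scalar_mx -raddfD /= mulNr mulrC subrr raddf0.
  case: (eqVneq (Dn n *m x) 0) => Dx.
    exists w0, 0, (x ord_max 0), 1; rewrite /yY !scale0r !add0r !scale1r Dw0.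
    have ex : x = x ord_max 0 *: en n by rewrite {1}(x_decomp x) Dx add0r.
    by rewrite -ex.
  exists x, 1, (x ord_max 0), 1; rewrite /yY scale1r -x_decomp scale1r.
  by split => //; rewrite trmx_mul Dn_tr -mulmxA DL.
have [z [z0 Lz]] := (rank_ltP L).1 HrL.
have [U HU] := factor2 Dw z0 DwL Lz.
have [u Hu] := factor1 y0 yg.
exists w, c, yn, c2, U, z, u; split => //.
have HU' : L = BX (Dn n *m w) U z := HU.
by rewrite /AY -HU' -Hu DL /g /L hsubmxK.
Qed.
End Y.


Section MxClosure2.
Variables (D : Type) (Pr : (D -> C) -> Prop).
Hypotheses (Pext : forall F G, Pr F -> (forall v, F v = G v) -> Pr G)
  (Pconst : forall c, Pr (fun _ => c))
  (Padd : forall F G, Pr F -> Pr G -> Pr (fun v => F v + G v))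
  (Pmul : forall F G, Pr F -> Pr G -> Pr (fun v => F v * G v)).
Local Notation Mpr := (Mpr Pr).

Lemma Mpr_Mm p (w : D -> 'cV[C]_p) j : Mpr w -> Mpr (fun t => Mm (w t) j).
Proof.
move=> Hw; apply: (Mpr_sub Pext Pconst Padd Pmul).
  by apply: (Mpr_scale Pext Pmul) (Hw j 0) (Mpr_const Pconst _).
by apply: (Mpr_mul Pext Pconst Padd Pmul) (Mpr_const Pconst _) (Mpr_tr Pext Hw).
Qed.

Lemma Mpr_BX p q (w : D -> 'cV[C]_p) U (z : D -> 'cV[C]_q) :
  Mpr w -> (forall j l, Mpr (fun t => U t j l)) -> Mpr z ->
  Mpr (fun t => BX (w t) (U t) (z t)).
Proof.
move=> Hw HU Hz; apply: (Mpr_sum Pext Pconst Padd) => j.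
apply: (Mpr_sum Pext Pconst Padd) => l.
apply: (Mpr_mul Pext Pconst Padd Pmul); last exact: (Mpr_tr Pext (Mpr_Mm _ Hz)).
by apply: (Mpr_mul Pext Pconst Padd Pmul); [exact: Mpr_Mm | exact: HU].
Qed.
Lemma Mpr_col a (f : D -> 'I_a -> C) :
  (forall i, Pr (fun t => f t i)) -> Mpr (fun t => \col_i f t i).
Proof. by move=> H i j; apply: Pext (H i) _ => t; rewrite mxE. Qed.
Lemma Mpr_row a b1 b2 (M1 : D -> 'M[C]_(a,b1)) (M2 : D -> 'M[C]_(a,b2)) :
  Mpr M1 -> Mpr M2 -> Mpr (fun t => row_mx (M1 t) (M2 t)).
Proof.
move=> H1 H2 i j; rewrite -(splitK j); case: (split j) => k /=.
  by apply: Pext (H1 i k) _ => t; rewrite row_mxEl.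
by apply: Pext (H2 i k) _ => t; rewrite row_mxEr.
Qed.
End MxClosure2.

Definition pv (T : finType) (t : 'I_#|T| -> C) (tau : T) := t (enum_rank tau).
Lemma pv_pf (T : finType) (tau : T) : polyfun (fun t : 'I_#|T| -> C => pv t tau).
Proof. exact: pf_coord. Qed.
Lemma pv_mk (T : finType) (g : T -> C) tau : pv (fun i => g (enum_val i)) tau = g tau.
Proof. by rewrite /pv enum_rankK. Qed.

Section XParam.
Variables n m : nat.
Hypothesis hkn : (m.+2 < n.+1)%N.
Local Notation K := m.+2.
Local Notation TX := ('I_n.+1 + unit + ('I_n.+1 * 'I_K * 'I_n.+1 * 'I_K) + 'I_K + unit)%type.
Local Notation MX := #|{: TX}|.

Definition yX (t : 'I_MX -> C) : 'cV[C]_(n.+1) := \col_i pv t (inl (inl (inl (inl i)))).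
Definition cX (t : 'I_MX -> C) : C := pv t (inl (inl (inl (inr tt)))).
Definition UX (t : 'I_MX -> C) j l : 'M[C]_(n.+1, K) := \matrix_(r, c) pv t (inl (inl (inr (j, l, r, c)))).
Definition zX (t : 'I_MX -> C) : 'cV[C]_K := \col_i pv t (inl (inr i)).
Definition xnX (t : 'I_MX -> C) : C := pv t (inr tt).
Definition PhiX (t : 'I_MX -> C) : 'I_(dimAmb n K) -> C :=
  enc (Dn n *m BX (Dn n *m yX t) (UX t) (zX t)) (cX t *: (Dn n *m yX t) + xnX t *: en n).

Lemma irr_X : irreducible_set (ptset (@inXX n K)).
Proof.
apply: (@irr_of_param _ MX _ PhiX).
- move=> i; rewrite /PhiX /yX /UX /zX /cX /xnX; apply: (enc_Pr (@pf_ext _)).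
  + apply: (Mpr_mul (@pf_ext _) (@pf_const _) (@pf_add _) (@pf_mul _)).
      exact: (Mpr_const (@pf_const _)).
    apply: (Mpr_BX (@pf_ext _) (@pf_const _) (@pf_add _) (@pf_mul _)).
    * apply: (Mpr_mul (@pf_ext _) (@pf_const _) (@pf_add _) (@pf_mul _)).
        exact: (Mpr_const (@pf_const _)).
      by apply: (Mpr_col (@pf_ext _)) => r; exact: pv_pf.
    * by move=> j l; exact: (Mpr_mx (@pf_ext _) (fun r c => @pv_pf TX (inl (inl (inr (j, l, r, c)))))).
    * by apply: (Mpr_col (@pf_ext _)) => r; exact: pv_pf.
  + move=> r; apply: (Mpr_add (@pf_ext _) (@pf_add _)).
      apply: (Mpr_scale (@pf_ext _) (@pf_mul _)); first exact: pv_pf.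
      apply: (Mpr_mul (@pf_ext _) (@pf_const _) (@pf_add _) (@pf_mul _)).
        exact: (Mpr_const (@pf_const _)).
      by apply: (Mpr_col (@pf_ext _)) => r'; exact: pv_pf.
    apply: (Mpr_scale (@pf_ext _) (@pf_mul _)); first exact: pv_pf.
    exact: (Mpr_const (@pf_const _)).
- by move=> t; rewrite /ptset /PhiX Amat_enc xvec_enc; apply: X_image.
- move=> v; rewrite /ptset => /(X_surj hkn) [y [c [U [z [xn [eA ex]]]]]].
  pose g (tau : TX) : C := match tau with
    | inl (inl (inl (inl i))) => y i 0
    | inl (inl (inl (inr _))) => c
    | inl (inl (inr (j, l, r, c'))) => U j l r c'
    | inl (inr i) => z i 0
    | inr _ => xn end.
  pose t : 'I_MX -> C := fun i => g (enum_val i).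
  have ey : yX t = y by apply/matrixP => r c'; rewrite !mxE pv_mk ord1.
  have eU : UX t = U.
    apply: FunctionalExtensionality.functional_extensionality => j.
    apply: FunctionalExtensionality.functional_extensionality => l.
    by apply/matrixP => r c'; rewrite !mxE pv_mk.
  have ez : zX t = z by apply/matrixP => r c'; rewrite !mxE pv_mk ord1.
  have ec : cX t = c by rewrite /cX pv_mk.
  have exn : xnX t = xn by rewrite /xnX pv_mk.
  exists t => i; rewrite -(enc_dec v i) /PhiX ey eU ez ec exn -eA -ex.
  by [].
Qed.
End XParam.

Section YParam.
Variables n m : nat.
Hypothesis hkn : (m.+2 < n.+1)%N.
Local Notation K := m.+2.
Local Notation TY := ('I_n.+1 + unit + unit + unit + ('I_n.+1 * 'I_m.+1 * 'I_n.+1 * 'I_m.+1)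
   + 'I_m.+1 + ('I_n.+1 * 'I_n.+1))%type.
Local Notation MY := #|{: TY}|.

Definition wY (t : 'I_MY -> C) : 'cV[C]_(n.+1) := \col_i pv t (inl (inl (inl (inl (inl (inl i)))))).
Definition cY (t : 'I_MY -> C) : C := pv t (inl (inl (inl (inl (inl (inr tt)))))).
Definition ynY (t : 'I_MY -> C) : C := pv t (inl (inl (inl (inl (inr tt))))).
Definition c2Y (t : 'I_MY -> C) : C := pv t (inl (inl (inl (inr tt)))).
Definition UY (t : 'I_MY -> C) j l : 'M[C]_(n.+1, m.+1) :=
  \matrix_(r, c) pv t (inl (inl (inr (j, l, r, c)))).
Definition zY (t : 'I_MY -> C) : 'cV[C]_(m.+1) := \col_i pv t (inl (inr i)).
Definition uY (t : 'I_MY -> C) j : 'cV[C]_(n.+1) := \col_r pv t (inr (j, r)).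
Definition PhiY (t : 'I_MY -> C) : 'I_(dimAmb n K) -> C :=
  enc (AY (wY t) (cY t) (ynY t) (UY t) (zY t) (uY t)) (c2Y t *: yY (wY t) (cY t) (ynY t)).

Lemma irr_Y : irreducible_set (ptset (@inYY n K)).
Proof.
have Pw : Mpr polyfun (fun t => wY t).
  by apply: (Mpr_col (@pf_ext _)) => r; exact: pv_pf.
have Pyy : Mpr polyfun (fun t => yY (wY t) (cY t) (ynY t)).
  apply: (Mpr_add (@pf_ext _) (@pf_add _)).
    apply: (Mpr_scale (@pf_ext _) (@pf_mul _)); first exact: pv_pf.
    apply: (Mpr_mul (@pf_ext _) (@pf_const _) (@pf_add _) (@pf_mul _)) => //.
    exact: (Mpr_const (@pf_const _)).
  apply: (Mpr_scale (@pf_ext _) (@pf_mul _)); first exact: pv_pf.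
  exact: (Mpr_const (@pf_const _)).
apply: (@irr_of_param _ MY _ PhiY).
- move=> i; rewrite /PhiY /AY; apply: (enc_Pr (@pf_ext _)).
  + have H1 : Mpr polyfun (fun t => \sum_j Mm (yY (wY t) (cY t) (ynY t)) j *m uY t j).
      apply: (Mpr_sum (@pf_ext _) (@pf_const _) (@pf_add _)) => j.
      apply: (Mpr_mul (@pf_ext _) (@pf_const _) (@pf_add _) (@pf_mul _)).
        exact: (Mpr_Mm (@pf_ext _) (@pf_const _) (@pf_add _) (@pf_mul _)).
      by apply: (Mpr_col (@pf_ext _)) => r; exact: pv_pf.
    have H2 : Mpr polyfun (fun t => Dn n *m BX (Dn n *m wY t) (UY t) (zY t)).
      apply: (Mpr_mul (@pf_ext _) (@pf_const _) (@pf_add _) (@pf_mul _)).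
        exact: (Mpr_const (@pf_const _)).
      apply: (Mpr_BX (@pf_ext _) (@pf_const _) (@pf_add _) (@pf_mul _)).
      * apply: (Mpr_mul (@pf_ext _) (@pf_const _) (@pf_add _) (@pf_mul _)) => //.
        exact: (Mpr_const (@pf_const _)).
      * by move=> j l; exact: (Mpr_mx (@pf_ext _) (fun r c => @pv_pf TY (inl (inl (inr (j, l, r, c)))))).
      * by apply: (Mpr_col (@pf_ext _)) => r; exact: pv_pf.
    exact: (Mpr_row (@pf_ext _) H1 H2).
  + move=> r; apply: (Mpr_scale (@pf_ext _) (@pf_mul _)) => //; exact: pv_pf.
- by move=> t; rewrite /ptset /PhiY Amat_enc xvec_enc; apply: Y_image.
- move=> v; rewrite /ptset => /(Y_surj hkn) [w [c [yn [c2 [U [z [u [eA ex]]]]]]]].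
  pose g (tau : TY) : C := match tau with
    | inl (inl (inl (inl (inl (inl i))))) => w i 0
    | inl (inl (inl (inl (inl (inr _))))) => c
    | inl (inl (inl (inl (inr _)))) => yn
    | inl (inl (inl (inr _))) => c2
    | inl (inl (inr (j, l, r, c'))) => U j l r c'
    | inl (inr i) => z i 0
    | inr (j, r) => u j r 0 end.
  pose t : 'I_MY -> C := fun i => g (enum_val i).
  have ew : wY t = w by apply/matrixP => r c'; rewrite !mxE pv_mk ord1.
  have eU : UY t = U.
    apply: FunctionalExtensionality.functional_extensionality => j.
    apply: FunctionalExtensionality.functional_extensionality => l.
    by apply/matrixP => r c'; rewrite !mxE pv_mk.
  have eu : uY t = u.
    apply: FunctionalExtensionality.functional_extensionality => j.
    by apply/matrixP => r c'; rewrite !mxE pv_mk ord1.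
  have ez : zY t = z by apply/matrixP => r c'; rewrite !mxE pv_mk ord1.
  have ec : cY t = c by rewrite /cY pv_mk.
  have eyn : ynY t = yn by rewrite /ynY pv_mk.
  have ec2 : c2Y t = c2 by rewrite /c2Y pv_mk.
  exists t => i; rewrite -(enc_dec v i) /PhiY ew eU eu ez ec eyn ec2 -eA -ex.
  by [].
Qed.
End YParam.


Section YRet.
Variables n m : nat.
Hypothesis hkn : (m.+2 < n.+1)%N.
Local Notation K := m.+2.
Local Notation N := (dimAmb n K).

Definition rY (A : 'M[C]_(n.+1,K)) : 'rV[C]_K := \row_j (if j == 0 then 0 else A ord_max j).
Definition CopY (A : 'M[C]_(n.+1,K)) : 'M[C]_K := 1%:M - (A ord_max 0)^-1 *: (delta_mx 0 0 *m rY A).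
Definition AY' (A : 'M[C]_(n.+1,K)) := A *m CopY A.

Lemma AY'E (A : 'M[C]_(n.+1,K)) i j : AY' A i j = A i j - (A ord_max 0)^-1 * A i 0 * rY A 0 j.
Proof.
rewrite /AY' /CopY mulmxBr mulmx1 -scalemxAr mulmxA -colE !mxE big_ord1 !mxE.
by rewrite mulrA.
Qed.

Lemma AY'_E (A : 'M[C]_(n.+1,K)) : (forall j : 'I_K, (0 < j)%N -> A ord_max j = 0) -> AY' A = A.
Proof.
move=> HE; rewrite /AY' /CopY; have -> : rY A = 0.
  apply/rowP => j; rewrite !mxE; case: eqP => // /eqP j0; apply: HE.
  by rewrite lt0n; apply: contra j0 => /eqP j0; apply/eqP/val_inj.
by rewrite mulmx0 scaler0 subr0 mulmx1.
Qed.

Lemma AY'_W (A : 'M[C]_(n.+1,K)) x : inW A x -> A ord_max 0 != 0 -> inYY (AY' A) x.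
Proof.
move=> [Hr Hx] a0.
have last : forall j : 'I_K, (0 < j)%N -> AY' A ord_max j = 0.
  move=> j j0; rewrite AY'E mxE; have -> : (j == 0) = false.
    by apply/negbTE; apply: contraTneq j0 => ->.
  by rewrite mulVf // mul1r subrr.
have a'0 : AY' A ord_max 0 = A ord_max 0 by rewrite AY'E !mxE eqxx mulr0 subr0.
have rk : (\rank (AY' A) < K)%N by apply: leq_ltn_trans (mxrankM_maxl _ _) Hr.
split; first by split => //; rewrite /AY' mulmxA Hx mul0mx.
split.
  case/rank_ltP: (rk) => z [z0 Az]; apply: (kernel_lastcols z0 Az).
  have := mul_last_row z last; rewrite Az mxE a'0 => /esym /eqP.
  by rewrite mulf_eq0 (negbTE a0) /= => /eqP.
by apply/rowP => j; rewrite 2!mxE [RHS]mxE; apply: last.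
Qed.

Lemma mult_Y : intersection_multiplicity_one (ptset (@inW n K)) (ptset (@inEE n K))
    (ptset (@inYY n K)).
Proof.
pose d := fun v : 'I_N -> C => Amat v ord_max 0.
have Pd : polyfun d := Amat_pf _ _.
apply: (@mult_one_crit _ _ _ _ d (fun v => enc (AY' (Amat v)) (xvec v))).
- exact: irr_Y hkn.
- by move=> v Zv; apply/(WE_XY _ _).2; right.
- exact: Pd.
- move=> i; apply: (enc_Pr (@Qd_ext _ d)).
  + move=> r c; apply: (Qd_ext _ (fun v => esym (AY'E _ r c))).
    apply: (Qd_add Pd); first exact: (Qd_pf _ (Amat_pf _ _)).
    apply: (Pr_opp (@Qd_ext _ d) (Qd_const d) (@Qd_mul _ d)).
    apply: (@Qd_mul _ d); first apply: (@Qd_mul _ d).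
    * exact: Qd_inv.
    * exact: (Qd_pf _ (Amat_pf _ _)).
    * case: (eqVneq c 0) => [->|c0].
        by apply: (Qd_ext (Qd_const d 0)) => v; rewrite mxE eqxx.
      apply: (Qd_ext (Qd_pf d (Amat_pf ord_max c))) => v.
      by rewrite [RHS]mxE (negbTE c0).
  + by move=> r; exact: (Qd_pf _ (xvec_pf _ _)).
- by move=> v Ev dv i; rewrite AY'_E ?enc_dec.
- by move=> v Vv dv; rewrite /ptset Amat_enc xvec_enc; exact: AY'_W.
- exists (enc (delta_mx ord_max 0) 0); split; last first.
    by rewrite /d Amat_enc mxE !eqxx oner_eq0.
  rewrite /ptset Amat_enc xvec_enc.
  have L0 : lastcols (delta_mx ord_max 0 : 'M[C]_(n.+1, K)) = 0.
    by apply/matrixP => i j; rewrite !mxE andbF.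
  split; split; rewrite ?L0 ?mxrank0 //.
    by rewrite mxrank_delta.
  by rewrite trmx0 mul0mx.
  by apply/rowP => j; rewrite !mxE.
Qed.
End YRet.


Lemma Dn_mulE n p (B : 'M[C]_(n.+1, p)) i j :
  (Dn n *m B) i j = if i == ord_max then 0 else B i j.
Proof.
rewrite /Dn mulmxBl mul1mx !mxE (bigD1 ord_max) //= big1 ?addr0 => [|l /negbTE Hl].
  by rewrite !mxE eqxx andbT; case: eqP => [->|_]; rewrite ?mul1r ?subrr ?mul0r ?subr0.
by rewrite !mxE Hl andbF mul0r.
Qed.

Section XRet.
Variables n m : nat.
Hypothesis hkn : (m.+2 < n.+1)%N.
Local Notation K := m.+2.
Local Notation N := (dimAmb n K).

Lemma hle : (m.+1 <= n.+1)%N.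
Proof. exact: leq_trans (leqnSn _) (ltnW hkn). Qed.
Definition rowR (i : 'I_m.+1) : 'I_n.+1 := widen_ord hle i.
Definition colL (j : 'I_m.+1) : 'I_K := lift 0 j.

Lemma rowR_neq i : (rowR i == ord_max) = false.
Proof.
apply/negbTE; rewrite -val_eqE /= neq_ltn; apply/orP; left.
by apply: leq_trans (ltn_ord i) _; rewrite -ltnS; exact: ltnW.
Qed.
Lemma rowR_inj : injective rowR.
Proof. by move=> i j /(congr1 val) /= /val_inj. Qed.

Definition GX (A : 'M[C]_(n.+1, K)) : 'M[C]_(m.+1) := \matrix_(i, j) A (rowR i) (colL j).
Definition gX (A : 'M[C]_(n.+1, K)) : 'cV[C]_(m.+1) := \col_i A (rowR i) 0.
Definition lX (A : 'M[C]_(n.+1, K)) : 'rV[C]_(m.+1) := \row_j A ord_max (colL j).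
Definition dX (A : 'M[C]_(n.+1, K)) : C := \det (GX A).
Definition muX (A : 'M[C]_(n.+1, K)) : 'rV[C]_(m.+1) := (dX A)^-1 *: (lX A *m \adj (GX A)).
Definition aX (A : 'M[C]_(n.+1, K)) : C := A ord_max 0 - (muX A *m gX A) 0 0.
Definition AX' (A : 'M[C]_(n.+1, K)) : 'M[C]_(n.+1, K) :=
  \matrix_(i, j) if i == ord_max then (if j == 0 then aX A else 0) else A i j.
Definition SX : 'M[C]_(m.+1, n.+1) := \matrix_(k, i) (rowR k == i)%:R.
Definition xX' (A : 'M[C]_(n.+1, K)) (x : 'cV[C]_(n.+1)) : 'cV[C]_(n.+1) :=
  x + x ord_max 0 *: (muX A *m SX)^T.

Lemma SX_mul p (B : 'M[C]_(n.+1, p)) : SX *m B = \matrix_(k, j) B (rowR k) j.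
Proof.
apply/matrixP => k j; rewrite !mxE (bigD1 (rowR k)) //= big1 ?addr0 => [|i /negbTE Hi].
  by rewrite mxE eqxx mul1r.
by rewrite mxE eq_sym Hi mul0r.
Qed.

Lemma SX_Dn : SX *m Dn n = SX.
Proof. by rewrite SX_mul; apply/matrixP => k j; rewrite !mxE rowR_neq /= subr0. Qed.

Lemma sumK (F : 'I_K -> C) : \sum_j F j = F 0 + \sum_(j < m.+1) F (colL j).
Proof. by rewrite big_ord_recl. Qed.

Lemma muG A : dX A != 0 -> muX A *m GX A = lX A.
Proof.
move=> d0; rewrite /muX -scalemxAl -mulmxA mul_adj_mx mul_mx_scalar scalerA.
by rewrite mulVf // scale1r.
Qed.

Lemma aX_W A : (\rank A < K)%N -> dX A != 0 -> aX A = 0.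
Proof.
case/rank_ltP => z [z0 Az] d0.
pose zL : 'cV[C]_(m.+1) := \col_j z (colL j) 0.
have Erow : forall i, A i 0 * z 0 0 + \sum_(j < m.+1) A i (colL j) * z (colL j) 0 = 0.
  by move=> i; move/matrixP: Az => /(_ i 0); rewrite !mxE sumK.
have EG : GX A *m zL = - (z 0 0) *: gX A.
  apply/matrixP => k c; rewrite ord1 !mxE.
  have := Erow (rowR k); rewrite addrC => /eqP; rewrite addr_eq0 => /eqP H.
  by rewrite mulNr mulrC -H; apply: eq_bigr => j _; rewrite !mxE.
have EL : (lX A *m zL) 0 0 = - (A ord_max 0 * z 0 0).
  have := Erow ord_max; rewrite addrC => /eqP; rewrite addr_eq0 => /eqP <-.
  by rewrite !mxE; apply: eq_bigr => j _; rewrite !mxE.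
have z00 : z 0 0 != 0.
  apply: contra z0 => /eqP z00.
  have : GX A *m zL = 0 by rewrite EG z00 oppr0 scale0r.
  move/(congr1 (mulmx (\adj (GX A)))); rewrite mulmxA mul_adj_mx mul_scalar_mx mulmx0.
  move/eqP; rewrite scaler_eq0 (negbTE d0) /= => /eqP zL0.
  apply/eqP/matrixP => j c; rewrite ord1 mxE; case: (unliftP 0 j) => [j'|] ->.
    by move/matrixP: zL0 => /(_ j' 0); rewrite !mxE.
  exact: z00.
have : (lX A *m zL) 0 0 = - (z 0 0) * (muX A *m gX A) 0 0.
  by rewrite -muG // -mulmxA EG -scalemxAr mxE.
rewrite EL mulNr => /eqP; rewrite eqr_opp => /eqP E.
have E' : (A ord_max 0 - (muX A *m gX A) 0 0) * z 0 0 = 0 by rewrite mulrBl E mulrC subrr.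
by move/eqP: E'; rewrite mulf_eq0 (negbTE z00) orbF => /eqP.
Qed.

Lemma colL_pos j : (0 < colL j)%N.
Proof. by []. Qed.

Lemma AX'_E A x : inEE A x -> AX' A = A /\ xX' A x = x.
Proof.
move=> HE; have l0 : lX A = 0 by apply/rowP => j; rewrite !mxE HE.
have mu0 : muX A = 0 by rewrite /muX l0 mul0mx scaler0.
split; last by rewrite /xX' mu0 mul0mx trmx0 scaler0 addr0.
apply/matrixP => i j; rewrite mxE; case: eqP => [->|] //.
case: eqP => [->|/eqP j0]; first by rewrite /aX mu0 mul0mx mxE subr0.
rewrite HE //; rewrite lt0n; apply: contra j0 => /eqP j0; apply/eqP/val_inj. exact: j0.
Qed.

Lemma rowlast_mu A : (\rank A < K)%N -> dX A != 0 ->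
  (en n)^T *m A = muX A *m SX *m A.
Proof.
move=> Hr d0; have a0 := aX_W Hr d0.
rewrite -mulmxA SX_mul /en trmx_delta -rowE; apply/rowP => j; rewrite !mxE.
case: (unliftP 0 j) => [j'|] ->.
  move/rowP: (muG d0) => /(_ j'); rewrite !mxE => <-.
  by apply: eq_bigr => k _; rewrite !mxE.
move: a0; rewrite /aX => /eqP; rewrite subr_eq0 => /eqP ->.
by rewrite !mxE; apply: eq_bigr => k _; rewrite !mxE.
Qed.

Lemma AX'_W A x : inW A x -> dX A != 0 -> inXX (AX' A) (xX' A x).
Proof.
move=> [Hr Hx] d0; have a0 := aX_W Hr d0.
have EA : AX' A = Dn n *m A.
  by apply/matrixP => i j; rewrite Dn_mulE mxE a0; case: eqP => //; rewrite if_same.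
rewrite EA.
have rk : (\rank (Dn n *m A) < K)%N by apply: leq_ltn_trans (mxrankM_maxr _ _) Hr.
split; split => //; last exact: row_Dn_mul.
have hx : x^T *m Dn n = x^T - x ord_max 0 *: (en n)^T.
  rewrite -Dn_tr -trmx_mul.
  have -> : Dn n *m x = x - x ord_max 0 *: en n by rewrite {2}(x_decomp x) addrK.
  by rewrite linearB /= linearZ.
rewrite /xX' linearD /= linearZ /= trmxK mulmxDl -scalemxAl !mulmxA hx.
rewrite -(mulmxA (muX A) SX) SX_Dn -(rowlast_mu Hr d0) mulmxBl Hx -scalemxAl.
by rewrite sub0r addrC subrr.
Qed.

Definition A0X : 'M[C]_(n.+1, K) := \matrix_(i, j) ((val i).+1 == val j)%:R.

Lemma A0X_X : inXX A0X 0.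
Proof.
have rk : (\rank A0X < K)%N.
  apply/rank_ltP; exists (delta_mx 0 0); split.
    by apply/eqP => /matrixP/(_ 0 0); rewrite !mxE /= => /eqP; rewrite oner_eq0.
  by rewrite -colE; apply/matrixP => i j; rewrite !mxE.
split; split => //; first by rewrite trmx0 mul0mx.
apply/rowP => j; rewrite !mxE; case: eqP => // E.
by have := ltn_ord j; rewrite -E ltnS leqNgt ltnW.
Qed.

Lemma A0X_d : dX A0X != 0.
Proof.
rewrite /dX; have -> : GX A0X = 1%:M by apply/matrixP => i j; rewrite !mxE /= eqSS.
by rewrite det1 oner_eq0.
Qed.

Lemma mult_X : intersection_multiplicity_one (ptset (@inW n K)) (ptset (@inEE n K))
    (ptset (@inXX n K)).
Proof.
pose d := fun v : 'I_N -> C => dX (Amat v).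
have Pd : polyfun d.
  rewrite /d /dX; apply: (Pr_det (@pf_ext _) (@pf_const _) (@pf_add _) (@pf_mul _)).
  by rewrite /GX; apply: (Mpr_mx (@pf_ext _)) => r c; exact: Amat_pf.
have QE := @Qd_ext _ d.
have QC := Qd_const d.
have QA := @Qd_add _ d Pd.
have QM := @Qd_mul _ d.
have QAm : forall r c, Qd d (fun v => Amat v r c) by move=> r c; exact: (Qd_pf d (Amat_pf r c)).
have Qmu : Mpr (Qd d) (fun v => muX (Amat v)).
  rewrite /muX; apply: (Mpr_scale QE QM); first exact: (Qd_inv d).
  apply: (Mpr_mul QE QC QA QM).
    by rewrite /lX; apply: (Mpr_mx QE) => r c; exact: QAm.
  apply: (Mpr_adj QE QC QA QM).
  by rewrite /GX; apply: (Mpr_mx QE) => r c; exact: QAm.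
have QaX : Qd d (fun v => aX (Amat v)).
  rewrite /aX; apply: (QA); first exact: QAm.
  apply: (Pr_opp QE QC QM).
  apply: (Mpr_mul QE QC QA QM); first exact: Qmu.
  by rewrite /gX; apply: (Mpr_col QE) => r; exact: QAm.
have HA : forall r c, Qd d (fun v => if r == ord_max then (if c == 0 then aX (Amat v) else 0)
                                     else Amat v r c).
  move=> r c; case: (r == ord_max); last exact: QAm.
  by case: (c == 0); [exact: QaX | exact: QC].
have Hx' : Mpr (Qd d) (fun v => xX' (Amat v) (xvec v)).
  rewrite /xX'; apply: (Mpr_add QE QA).
    by move=> r c; rewrite ord1; exact: (Qd_pf d (xvec_pf K r)).
  apply: (Mpr_scale QE QM); first exact: (Qd_pf d (xvec_pf K ord_max)).
  apply: (Mpr_tr QE); apply: (Mpr_mul QE QC QA QM); first exact: Qmu.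
  exact: (Mpr_const QC).
apply: (@mult_one_crit _ _ _ _ d (fun v => enc (AX' (Amat v)) (xX' (Amat v) (xvec v)))).
- exact: irr_X hkn.
- by move=> v Zv; apply/(WE_XY _ _).2; left.
- exact: Pd.
- move=> i /=.
  apply: (@enc_Pr n K ('I_N -> C) (Qd d) (@Qd_ext _ d) (fun v => AX' (Amat v)) (fun v => xX' (Amat v) (xvec v))).
    by move=> r c; apply: (QE _ _ (HA r c)) => v; rewrite /AX' [RHS]mxE.
  by move=> r; exact: Hx'.
- by move=> v Ev dv i; have [E1 E2] := @AX'_E (Amat v) (xvec v) Ev; rewrite E1 E2 enc_dec.
- by move=> v Vv dv; rewrite /ptset Amat_enc xvec_enc; exact: AX'_W.
- exists (enc A0X 0); rewrite /ptset Amat_enc xvec_enc /d Amat_enc.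
  by split; [exact: A0X_X | exact: A0X_d].
Qed.
End XRet.


Theorem proposition7 (n k : nat) (hk1 : (1 < k)%N) (hkn : (k < n.+1)%N) :
  (forall (A : 'M[C]_(n.+1, k)) (x : 'cV[C]_(n.+1)),
      inW A x /\ inEE A x <-> inXX A x \/ inYY A x) /\
  intersection_multiplicity_one (ptset (@inW n k)) (ptset (@inEE n k))
    (ptset (@inXX n k)) /\
  intersection_multiplicity_one (ptset (@inW n k)) (ptset (@inEE n k))
    (ptset (@inYY n k)).
Proof.
case: k hk1 hkn => [//|[//|m]] _ hkn.
split; first by move=> A x; exact: WE_XY.
by split; [exact: mult_X hkn | exact: mult_Y hkn].
Qed.
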